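(* Let $(\Delta,R)$ be a gentle quiver. Then \[ \sum_{\mathcal O\in\mathcal N/\mathbb Z\,\cup\,\mathcal C/\mathbb Z} p(\mathcal O) = 2|\Delta_0|-|\Delta_1| \qquad\text{and}\qquad \sum_{\mathcal O\in\mathcal N/\mathbb Z\,\cup\,\mathcal C/\mathbb Z} q(\mathcal O) = |\Delta_1|. \]
   Context: A quiver $\Delta$ has finite vertex set $\Delta_0$, arrow set $\Delta_1$, maps $s,t$. A path of length $n\ge1$ is $(\alpha_1,\dots,\alpha_n)$ with $s\alpha_i=t\alpha_{i+1}$. A gentle quiver is $(\Delta,R)$ with $\Delta$ connected, $R$ a set of paths of length 2, such that: (1) each vertex is start of at most two arrows and end of at most two arrows; (2) for each arrow $\alpha$ at most one $\beta$ with $s\beta=t\alpha$, $(\beta,\alpha)\notin R$ and at most one $\gamma$ with $t\gamma=s\alpha$, $(\alpha,\gamma)\notin R$; (3) for each $\alpha$ at most one $\beta$ with $(\beta,\alpha)\in R$ and at most one $\gamma$ with $(\alpha,\gamma)\in R$; (4) for some $n$ every path of length $n$ has a subpath in $R$. Fix $\sigma,\tau:\Delta_1\to\{\pm1\}$ with distinct arrows of same start having opposite $\sigma$, distinct arrows of same end opposite $\tau$, and for $s\alpha=t\beta$: $(\alpha,\beta)\in R$ iff $\sigma\alpha=\tau\beta$; $\sigma\omega=\sigma\alpha_n,\tau\omega=\tau\alpha_1$. Permitted paths: paths with no consecutive pair in $R$, plus trivial $1_{x,\varepsilon}$ ($s=t=x$, $\sigma=\varepsilon,\tau=-\varepsilon$);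 maximal if no arrow $\alpha$ with $s\alpha=t\omega,\sigma\alpha=-\tau\omega$ and no $\beta$ with $t\beta=s\omega,\tau\beta=-\sigma\omega$; set $\mathcal M$. Antipaths: all consecutive pairs in $R$, plus trivial $1'_{x,\varepsilon}$ ($s=t=x$, $\sigma=\tau=\varepsilon$); maximal if no $\alpha$ with $s\alpha=t\omega,\sigma\alpha=\tau\omega$ and no $\beta$ with $t\beta=s\omega,\tau\beta=\sigma\omega$; set $\mathcal N$. $\phi:\mathcal M\to\mathcal N$, $\omega\mapsto$ unique $\omega'$ with $t\omega'=t\omega,\tau\omega'=-\tau\omega$; $\psi:\mathcal N\to\mathcal M$, $\omega\mapsto$ unique $\omega'$ with $s\omega'=s\omega,\sigma\omega'=-\sigma\omega$; $\Phi=\phi\psi$ acts on $\mathcal N$ and $\mathcal N/\mathbb Z$ is its set of orbits; for $\mathcal O\in\mathcal N/\mathbb Z$, $p(\mathcal O)=|\mathcal O|$ and $q(\mathcal O)=\sum_{\omega\in\mathcal O}\ell(\omega)$. $\mathcal C$: arrows $\alpha$ with $(\alpha)$ not a subpath of a maximal antipath; $\Psi:\mathcal C\to\mathcal C$, $\alpha\mapsto$ unique $\beta\in\mathcal C$ with $t\beta=s\alpha,\tau\beta=\sigma\alpha$; $\mathcal C/\mathbb Z$ its orbits, with $p(\mathcal O)=0$, $q(\mathcal O)=|\mathcal O|$. *)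

(* Defs.v *)
From HB Require Import structures.
From mathcomp Require Import all_boot all_order all_algebra.
From mathcomp Require Import finmap.
From Stdlib Require Import ClassicalEpsilon.

Set Implicit Arguments.
Unset Strict Implicit.
Unset Printing Implicit Defensive.

Local Open Scope fset_scope.

(* Signs {+1,-1} are encoded as booleans: true = +1, false = -1, and
   negation -e is negb e. *)

Section Gentle.
Variables (V A : finType) (s t : A -> V) (R : rel A).
(* R a b  means the length-2 path (a, b) (with s a = t b) belongs to R. *)

Definition is_path (w : seq A) : bool :=
  (w != [::]) && sorted (fun a b => s a == t b) w.

Definition und_adj : rel V :=
  fun x y => [exists a, ((s a == x) && (t a == y)) || ((s a == y) && (t a == x))].

Definition gentle : Prop :=
  (forall x y : V, connect und_adj x y) /\
  (forall a b, R a b -> s a = t b) /\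
  (forall x : V, #|[set a | s a == x]| <= 2 /\ #|[set a | t a == x]| <= 2)%N /\
  (forall al : A, #|[set b | (s b == t al) && ~~ R b al]| <= 1 /\
                  #|[set c | (t c == s al) && ~~ R al c]| <= 1)%N /\
  (forall al : A, #|[set b | R b al]| <= 1 /\ #|[set c | R al c]| <= 1)%N /\
  (exists n : nat, (0 < n)%N /\
     forall w : seq A, is_path w -> size w = n ->
       ~~ sorted (fun a b => ~~ R a b) w).

Variables (sigma tau : A -> bool).

Definition sign_functions : Prop :=
  (forall a b, a != b -> s a = s b -> sigma a != sigma b) /\
  (forall a b, a != b -> t a = t b -> tau a != tau b) /\
  (forall a b, s a = t b -> (R a b <-> sigma a = tau b)).

(* Paths, permitted or antipaths:
   inl (inl (x,e))  = trivial permitted path 1_{x,e}   (sigma = e, tau = -e)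
   inl (inr (x,e))  = trivial antipath 1'_{x,e}        (sigma = tau = e)
   inr (a, w)       = nontrivial path with arrow list a :: w. *)
Definition gpath : Type := ((V * bool) + (V * bool) + (A * seq A))%type.

Definition arrows (g : gpath) : seq A :=
  match g with inr (a, w) => a :: w | _ => [::] end.

Definition glen (g : gpath) : nat := size (arrows g).

Definition gsrc (g : gpath) : V :=
  match g with
  | inl (inl (x, _)) | inl (inr (x, _)) => x
  | inr (a, w) => s (last a w)
  end.

Definition gtgt (g : gpath) : V :=
  match g with
  | inl (inl (x, _)) | inl (inr (x, _)) => x
  | inr (a, _) => t a
  end.

Definition gsigma (g : gpath) : bool :=
  match g with
  | inl (inl (_, e)) | inl (inr (_, e)) => e
  | inr (a, w) => sigma (last a w)
  end.

Definition gtau (g : gpath) : bool :=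
  match g with
  | inl (inl (_, e)) => ~~ e
  | inl (inr (_, e)) => e
  | inr (a, _) => tau a
  end.

Definition permitted (g : gpath) : bool :=
  match g with
  | inl (inl _) => true
  | inl (inr _) => false
  | inr (a, w) => is_path (a :: w) && sorted (fun x y => ~~ R x y) (a :: w)
  end.

Definition antipath (g : gpath) : bool :=
  match g with
  | inl (inl _) => false
  | inl (inr _) => true
  | inr (a, w) => is_path (a :: w) && sorted R (a :: w)
  end.

Definition maxPerm (g : gpath) : bool :=
  [&& permitted g,
      ~~ [exists al, (s al == gtgt g) && (sigma al == ~~ gtau g)] &
      ~~ [exists be, (t be == gsrc g) && (tau be == ~~ gsigma g)]].

(* the set N of maximal antipaths *)
Definition maxAnti (g : gpath) : bool :=
  [&& antipath g,
      ~~ [exists al, (s al == gtgt g) && (sigma al == gtau g)] &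
      ~~ [exists be, (t be == gsrc g) && (tau be == gsigma g)]].

Definition phi (g : gpath) : gpath :=
  epsilon (inhabits g)
    (fun g' => maxAnti g' /\ gtgt g' = gtgt g /\ gtau g' = ~~ gtau g).

Definition psi (g : gpath) : gpath :=
  epsilon (inhabits g)
    (fun g' => maxPerm g' /\ gsrc g' = gsrc g /\ gsigma g' = ~~ gsigma g).

Definition Phi (g : gpath) : gpath := phi (psi g).

(* Orbits of Phi on N, given a finite set sN enumerating N *)
Definition Phi_orbit (sN : {fset gpath}) (g : gpath) : {fset gpath} :=
  [fset iter k Phi g | k in iota 0 #|` sN|].

Definition N_orbits (sN : {fset gpath}) : {fset {fset gpath}} :=
  [fset Phi_orbit sN g | g in sN].

Definition pO (O : {fset gpath}) : nat := #|` O|.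
Definition qO (O : {fset gpath}) : nat := (\sum_(g <- O) glen g)%N.

(* C: arrows al such that (al) is not a subpath of a maximal antipath *)
Definition pbool (P : Prop) : bool :=
  if excluded_middle_informative P then true else false.

Definition Cset : {set A} :=
  [set al | ~~ pbool (exists g, maxAnti g /\ al \in arrows g)].

Definition Psi (al : A) : A :=
  epsilon (inhabits al)
    (fun be => be \in Cset /\ t be = s al /\ tau be = sigma al).

Definition Psi_orbit (al : A) : {set A} :=
  [set iter (nat_of_ord k) Psi al | k : 'I_#|Cset|].

Definition C_orbits : {set {set A}} := [set Psi_orbit al | al in Cset].

Definition pC (O : {set A}) : nat := 0.
Definition qC (O : {set A}) : nat := #|O|.

End Gentle.

(* Main.v *)
Require Import Defs.
From HB Require Import structures.
From mathcomp Require Import all_boot all_order all_algebra.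
From mathcomp Require Import finmap.
From Stdlib Require Import Classical ClassicalEpsilon.
From mathcomp Require Import zify.

Set Implicit Arguments.
Unset Strict Implicit.
Unset Printing Implicit Defensive.

Section Gen.
Variables (T : eqType) (e : rel T).
Hypothesis fn : forall x y y', e x y -> e x y' -> y = y'.

Lemma det_gen a w1 w2 : path e a w1 -> path e a w2 ->
  (forall y, ~~ e (last a w1) y) -> (forall y, ~~ e (last a w2) y) -> w1 = w2.
Proof.
elim: w1 a w2 => [|b w1 IH] a [|c w2] //=.
- by move=> _ /andP[Hac _] H1 _; have := H1 c; rewrite Hac.
- by move=> /andP[Hab _] _ _ H2; have := H2 b; rewrite Hab.
- move=> /andP[Hab Hb] /andP[Hac Hc] H1 H2.
  have bc := fn Hab Hac; subst c; congr (_ :: _); exact: IH Hb Hc H1 H2.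
Qed.

Lemma uniq_gen a w : path e a w -> (forall y, ~~ e (last a w) y) -> uniq (a :: w).
Proof.
elim: w a => [|b w IH] a //= .
case/andP => Hab Hb Hl.
have /= -> := IH b Hb Hl; rewrite andbT.
apply/negP => ain.
have Hp : path e a (b :: w) by rewrite /= Hab.
have Hl' : forall y, ~~ e (last a (b :: w)) y by [].
move: Hp Hl'; clear Hl Hb IH; case/splitPr: ain => w1 w2.
move=> Hp Hl.
have Hp2 : path e a w2.
  by move: Hp; rewrite cat_path /= => /and3P[_ _ ->].
have Hl2 : forall y, ~~ e (last a w2) y.
  by move=> y; have := Hl y; rewrite last_cat.
have := det_gen Hp Hp2 Hl Hl2.
move=> /(congr1 size); rewrite /= size_cat /= => /eqP.
move=> H; have := H; lia.
Qed.
End Gen.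

Lemma lastI_rev (T : eqType) (a : T) w : rev (a :: w) = last a w :: rev (belast a w).
Proof. by rewrite lastI rev_rcons. Qed.

Lemma rev_last (T : eqType) (a : T) w : last (last a w) (rev (belast a w)) = a.
Proof. by case: w => //= b w; rewrite rev_cons last_rcons. Qed.

Lemma rev_path' (T : eqType) (e : rel T) a w :
  path (fun x y => e y x) (last a w) (rev (belast a w)) = path e a w.
Proof. by rewrite (rev_path (fun x y => e y x)). Qed.

Lemma split_walk (T : eqType) (e : rel T) a w x : x \in a :: w -> path e a w ->
  exists u v, [/\ a :: w = u ++ x :: v, path e x v & last a w = last x v].
Proof.
rewrite inE; case: eqP => [-> _ Hp|_ /= xw Hp]; first by exists [::], w.
case/splitPr: xw Hp => w1 w2; rewrite cat_path /= => /and3P[_ _ Hp].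
by exists (a :: w1), w2; rewrite last_cat.
Qed.

Section Gen2.
Variables (T : eqType) (e : rel T).
Hypothesis fn : forall x y y', e x y -> e x y' -> y = y'.
Hypothesis cofn : forall x x' y, e x y -> e x' y -> x = x'.
Let fe := fun x y => e y x.
Let fnf : forall x y y', fe x y -> fe x y' -> y = y'.
Proof. by move=> x y y' H1 H2; exact: cofn H1 H2. Qed.

Lemma det_rev a1 w1 a2 w2 : path e a1 w1 -> path e a2 w2 ->
  last a1 w1 = last a2 w2 -> (forall y, ~~ e y a1) -> (forall y, ~~ e y a2) ->
  a1 :: w1 = a2 :: w2.
Proof.
move=> H1 H2 El N1 N2.
rewrite -[a1 :: w1]revK -[a2 :: w2]revK; congr rev; rewrite !lastI_rev El.
congr (_ :: _).
apply: (det_gen fnf (a := last a2 w2)); rewrite /fe.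
- by rewrite -{1}El rev_path'.
- by rewrite rev_path'.
- by move=> y; rewrite -{1}El rev_last.
- by move=> y; rewrite rev_last.
Qed.

Lemma uniq_rev a w : path e a w -> (forall y, ~~ e y a) -> uniq (a :: w).
Proof.
move=> Hp Hn; rewrite -rev_uniq lastI_rev.
apply: (uniq_gen fnf); rewrite ?rev_path' ?rev_last //.
Qed.

Lemma mem_disj a1 w1 a2 w2 x : path e a1 w1 -> path e a2 w2 ->
  (forall y, ~~ e y a1) -> (forall y, ~~ e y a2) ->
  (forall y, ~~ e (last a1 w1) y) -> (forall y, ~~ e (last a2 w2) y) ->
  x \in a1 :: w1 -> x \in a2 :: w2 -> a1 :: w1 = a2 :: w2.
Proof.
move=> H1 H2 N1 N2 L1 L2 x1 x2.
have [u1 [v1 [_ P1 E1]]] := split_walk x1 H1.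
have [u2 [v2 [_ P2 E2]]] := split_walk x2 H2.
apply: det_rev => //; rewrite E1 E2; congr last.
apply: (det_gen fn P1 P2) => y; rewrite -?E1 -?E2 //.
Qed.
End Gen2.

Section Gen3.
Variables (T : finType) (e : rel T).
Hypothesis fn : forall x y y', e x y -> e x y' -> y = y'.
Hypothesis cofn : forall x x' y, e x y -> e x' y -> x = x'.

Lemma exists_ext a0 : (forall y, ~~ e y a0) ->
  exists w, path e a0 w /\ forall y, ~~ e (last a0 w) y.
Proof.
move=> Hn; apply: NNPP => Hc.
have ext : forall w, path e a0 w -> exists y, e (last a0 w) y.
  move=> w Hw; apply: NNPP => Hy; apply: Hc; exists w; split => // y.
  by apply/negP => Hy'; apply: Hy; exists y.
have big : forall k, exists w, path e a0 w /\ size w = k.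
  elim=> [|k [w [Hw Hs]]]; first by exists [::].
  have [y Hy] := ext w Hw; exists (rcons w y).
  by rewrite rcons_path Hw Hy size_rcons Hs.
have [w [Hw Hs]] := big #|T|.
have := uniq_rev cofn Hw Hn => /card_uniqP.
have := max_card (mem (a0 :: w)) => /[swap] ->; rewrite /= Hs ltnn.
by [].
Qed.

End Gen3.

Lemma exists_ext_rev (T : finType) (e : rel T)
  (fn : forall x y y', e x y -> e x y' -> y = y') b0 : (forall y, ~~ e b0 y) ->
  exists a w, [/\ path e a w, last a w = b0 & forall y, ~~ e y a].
Proof.
move=> Hn.
have cofnf : forall x x' y, (fun x y => e y x) x y -> (fun x y => e y x) x' y -> x = x'.
  by move=> x x' y H1 H2; exact: fn H1 H2.
have [w [Hw Hl]] := exists_ext cofnf Hn.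
exists (last b0 w), (rev (belast b0 w)); split.
- by have := rev_path' (fun x y => e y x) b0 w; rewrite Hw => H; exact: H.
- by rewrite rev_last.
- exact: Hl.
Qed.

Lemma pred_in (T : eqType) (e : rel T) a w y : path e a w -> y \in a :: w -> y != a ->
  exists2 x, x \in a :: w & e x y.
Proof.
elim: w a => [|b w IH] a /=; first by rewrite inE => _ ->.
move=> /andP[eab pb]; rewrite !inE => /orP[-> //|/orP[/eqP->|yw]] _.
  by exists a; rewrite ?inE ?eqxx.
case: (eqVneq y b) => [->|ynb]; first by exists a; rewrite ?inE ?eqxx.
have yin : y \in b :: w by rewrite inE yw orbT.
have [x xin exy] := IH b pb yin ynb.
by exists x => //; rewrite inE xin orbT.
Qed.

Section Orb.
Variables (T : eqType) (f : T -> T) (S : seq T).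
Hypothesis fS : forall x, x \in S -> f x \in S.
Hypothesis finj : {in S &, injective f}.

Lemma iter_in k x : x \in S -> iter k f x \in S.
Proof. by move=> xS; elim: k => //= k IH; apply: fS. Qed.

Lemma iter_mul x p m : iter p f x = x -> iter (m * p) f x = x.
Proof. by move=> H; elim: m => // m IH; rewrite mulSn iterD IH. Qed.

Lemma period x : x \in S -> exists2 p, 0 < p <= size S & iter p f x = x.
Proof.
move=> xS.
have NU : ~~ uniq (mkseq (fun k => iter k f x) (size S).+1).
  apply/negP => U.
  have : {subset mkseq (fun k => iter k f x) (size S).+1 <= S}.
    by move=> y /mapP[k _ ->]; apply: iter_in.
  by move/(uniq_leq_size U); rewrite size_mkseq ltnn.
have [i [j [lij ljs E]]] := uniqPn x NU.
rewrite size_mkseq in ljs.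
rewrite !nth_mkseq // in E; last by apply: ltn_trans ljs.
have peel : forall i d, iter (d + i) f x = iter i f x -> iter d f x = x.
  elim=> [|k IH] d; first by rewrite addn0.
  rewrite addnS /= => H; apply: IH; apply: finj => //; exact: iter_in.
exists (j - i); last by apply: (peel i); rewrite subnK ?E // ltnW.
by rewrite subn_gt0 lij /=; apply: leq_trans (leq_subr _ _) _.
Qed.

Definition orb x := [seq iter k f x | k <- iota 0 (size S)].

Lemma orbP x y : x \in S -> (y \in orb x) <-> exists k, y = iter k f x.
Proof.
move=> xS; split; first by case/mapP => k _ ->; exists k.
case=> k ->; have [p /andP[p0 pS] Hp] := period xS.
have -> : iter k f x = iter (k %% p) f x.
  by rewrite {1}(divn_eq k p) addnC iterD iter_mul.
apply: map_f; rewrite mem_iota /= add0n; apply: leq_trans pS.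
by rewrite ltn_mod.
Qed.

Lemma orb_self x : x \in S -> x \in orb x.
Proof. by move=> xS; apply/orbP => //; exists 0. Qed.

Lemma orb_sub x y : x \in S -> y \in orb x -> y \in S.
Proof. by move=> xS /orbP [] // k ->; apply: iter_in. Qed.

Lemma orb_eq x y : x \in S -> y \in orb x -> orb x =i orb y.
Proof.
move=> xS yx; have yS := orb_sub xS yx.
case/orbP: yx => // j yj z; apply/idP/idP.
- case/orbP => // k ->; apply/orbP => //.
  have [p /andP[p0 _] Hp] := period xS.
  exists (k + p.-1 * j); rewrite iterD yj -(iterD (p.-1 * j)) -mulSnr prednK //.
  by rewrite mulnC iter_mul.
- case/orbP => // k ->; apply/orbP => //; exists (k + j).
  by rewrite iterD yj.
Qed.
End Orb.
Lemma sum_part (T X : eqType) (S : seq T) (Os : seq X) (m : X -> pred T) (F : T -> nat) :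
  (forall x, x \in S -> count (fun O => m O x) Os = 1) ->
  \sum_(O <- Os) \sum_(x <- S | m O x) F x = \sum_(x <- S) F x.
Proof.
move=> H.
under eq_bigr do rewrite big_mkcond /=.
rewrite exchange_big /=; apply: eq_big_seq => x xS.
by rewrite -big_mkcond big_const_seq H //= addn0.
Qed.

Lemma sum_sub (T : eqType) (S L : seq T) (F : T -> nat) :
  uniq S -> uniq L -> {subset L <= S} ->
  \sum_(x <- S | x \in L) F x = \sum_(x <- L) F x.
Proof.
move=> US UL sub; rewrite -big_filter; apply: perm_big; apply: uniq_perm.
- exact: filter_uniq.
- exact: UL.
- by move=> x; rewrite mem_filter; apply/andP/idP => [[]//|xL]; split => //; apply: sub.
Qed.

Section Main.
Variables (V A : finType) (s t : A -> V) (R : rel A) (sigma tau : A -> bool).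
Hypothesis HS : sign_functions s t R sigma tau.

Definition out a := (s a, sigma a).
Definition inn a := (t a, tau a).
Definition outp a := (s a, ~~ sigma a).
Definition eA := fun x y => out x == inn y.
Definition eP := fun x y => outp x == inn y.

Lemma out_inj : injective out.
Proof.
case: HS => H1 _ a b [Es Esig]; apply/eqP; apply: contraT => nab.
by have := H1 a b nab Es; rewrite Esig eqxx.
Qed.

Lemma outp_inj : injective outp.
Proof. by move=> a b [Es /negb_inj Esig]; apply: out_inj; rewrite /out Es Esig. Qed.

Lemma inn_inj : injective inn.
Proof.
case: HS => _ [H2 _] a b [Es Esig]; apply/eqP; apply: contraT => nab.
by have := H2 a b nab Es; rewrite Esig eqxx.
Qed.

Lemma fnA x y y' : eA x y -> eA x y' -> y = y'.
Proof. by rewrite /eA /= => /eqP E1 /eqP E2; apply: inn_inj; rewrite -E1 -E2. Qed.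
Lemma cofnA x x' y : eA x y -> eA x' y -> x = x'.
Proof. by rewrite /eA /= => /eqP E1 /eqP E2; apply: out_inj; rewrite E1 E2. Qed.
Lemma fnP x y y' : eP x y -> eP x y' -> y = y'.
Proof. by rewrite /eP /= => /eqP E1 /eqP E2; apply: inn_inj; rewrite -E1 -E2. Qed.
Lemma cofnP x x' y : eP x y -> eP x' y -> x = x'.
Proof. by rewrite /eP /= => /eqP E1 /eqP E2; apply: outp_inj; rewrite E1 E2. Qed.

Lemma antipathE a w : antipath s t R (inr (a, w)) = path eA a w.
Proof.
rewrite /antipath /is_path /= -path_relI; apply: eq_path => x y /=.
rewrite /eA /out /inn xpair_eqE; case: (eqVneq (s x) (t y)) => //= E.
case: HS => _ [_ H3]; case: (H3 x y E) => H H'; apply/idP/eqP; [exact: H|exact: H'].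
Qed.

Lemma permittedE a w : permitted s t R (inr (a, w)) = path eP a w.
Proof.
rewrite /permitted /is_path /= -path_relI; apply: eq_path => x y /=.
rewrite /eP /outp /inn xpair_eqE; case: (eqVneq (s x) (t y)) => //= E.
case: HS => _ [_ H3]; case: (H3 x y E) => H H'.
move: H H'; case: (R x y); case: (sigma x); case: (tau y) => //= H H';
  solve [have := H erefl; done | have := H' erefl; done].
Qed.


Notation maxA := (maxAnti s t R sigma tau).
Notation maxP := (maxPerm s t R sigma tau).

Lemma bneq (a b : bool) : (~~ a == b) = (a == ~~ b).
Proof. by case: a; case: b. Qed.

Lemma maxAnti_out g : maxA g -> forall a, out a != (gtgt t g, gtau tau g).
Proof.
case/and3P => _ /existsPn H _ a; apply/negP => /eqP[E1 E2].
by have := H a; rewrite E1 E2 !eqxx.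
Qed.

Lemma maxAnti_inn g : maxA g -> forall b, inn b != (gsrc s g, gsigma sigma g).
Proof.
case/and3P => _ _ /existsPn H b; apply/negP => /eqP[E1 E2].
by have := H b; rewrite E1 E2 !eqxx.
Qed.

Lemma maxPerm_out g : maxP g -> forall a, out a != (gtgt t g, ~~ gtau tau g).
Proof.
case/and3P => _ /existsPn H _ a; apply/negP => /eqP[E1 E2].
by have := H a; rewrite E1 E2 !eqxx.
Qed.

Lemma maxPerm_inn g : maxP g -> forall b, inn b != (gsrc s g, ~~ gsigma sigma g).
Proof.
case/and3P => _ _ /existsPn H b; apply/negP => /eqP[E1 E2].
by have := H b; rewrite E1 E2 !eqxx.
Qed.

Lemma maxAnti_cases g : maxA g ->
  (exists x e, g = inl (inr (x, e))) \/ (exists a w, g = inr (a, w) /\ path eA a w).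
Proof.
case: g => [[[x e]|[x e]]|[a w]] //; first by left; exists x, e.
by case/and3P; rewrite antipathE => H _ _; right; exists a, w.
Qed.

Lemma maxPerm_cases g : maxP g ->
  (exists x e, g = inl (inl (x, e))) \/ (exists a w, g = inr (a, w) /\ path eP a w).
Proof.
case: g => [[[x e]|n]|[a w]] //; first by left; exists x, e.
by case/and3P; rewrite permittedE => H _ _; right; exists a, w.
Qed.

Lemma maxAnti_triv n : (forall a, out a != n) -> (forall b, inn b != n) ->
  maxA (inl (inr n)).
Proof.
case: n => x e Ho Hi; apply/and3P; split => //; apply/existsPn.
- by move=> a; have := Ho a; rewrite /out xpair_eqE.
- by move=> b; have := Hi b; rewrite /inn xpair_eqE.
Qed.

Lemma maxAnti_nt a w : path eA a w -> (forall y, ~~ eA y a) ->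
  (forall y, ~~ eA (last a w) y) -> maxA (inr (a, w)).
Proof.
move=> Hp Ho Hi; apply/and3P; split; first by rewrite antipathE.
- by apply/existsPn => b; have := Ho b; rewrite /eA /out /inn xpair_eqE.
- apply/existsPn => b; have := Hi b; by rewrite /eA /out /inn xpair_eqE /= eq_sym [tau b == _]eq_sym.
Qed.

Lemma maxPerm_triv x e : (forall a, outp a != (x, ~~ e)) -> (forall b, inn b != (x, ~~ e)) ->
  maxP (inl (inl (x, e))).
Proof.
move=> Ho Hi; apply/and3P; split => //; apply/existsPn.
- by move=> a; have := Ho a; rewrite /outp xpair_eqE /= bneq.
- by move=> b; have := Hi b; rewrite /inn xpair_eqE.
Qed.

Lemma maxPerm_nt a w : path eP a w -> (forall y, ~~ eP y a) ->
  (forall y, ~~ eP (last a w) y) -> maxP (inr (a, w)).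
Proof.
move=> Hp Ho Hi; apply/and3P; split; first by rewrite permittedE.
- by apply/existsPn => b; have := Ho b; rewrite /eP /outp /inn xpair_eqE /= (bneq (sigma b)).
- apply/existsPn => b; have := Hi b; rewrite /eP /outp /inn xpair_eqE /=.
  by rewrite [t b == _]eq_sym [tau b == _]eq_sym.
Qed.


Lemma maxAnti_nt_inv a w : maxA (inr (a, w)) ->
  [/\ path eA a w, forall y, ~~ eA y a & forall y, ~~ eA (last a w) y].
Proof.
move=> M; split.
- by case/and3P: M; rewrite antipathE.
- by move=> y; have := maxAnti_out M y.
- by move=> y; have := maxAnti_inn M y; rewrite /eA /= eq_sym.
Qed.

Lemma maxAnti_triv_inv x e : maxA (inl (inr (x, e))) ->
  (forall a, out a != (x, e)) /\ (forall b, inn b != (x, e)).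
Proof. by move=> M; split => y; [have := maxAnti_out M y| have := maxAnti_inn M y]. Qed.

Lemma maxPerm_nt_inv a w : maxP (inr (a, w)) ->
  [/\ path eP a w, forall y, ~~ eP y a & forall y, ~~ eP (last a w) y].
Proof.
move=> M; split.
- by case/and3P: M; rewrite permittedE.
- move=> y; have := maxPerm_out M y; rewrite /eP /out /outp /inn /= !xpair_eqE.
  by rewrite (bneq (sigma y)).
- by move=> y; have := maxPerm_inn M y; rewrite /eP /= eq_sym.
Qed.

Lemma maxPerm_triv_inv x e : maxP (inl (inl (x, e))) ->
  (forall a, outp a != (x, ~~ e)) /\ (forall b, inn b != (x, ~~ e)).
Proof.
move=> M; split => y; last by have := maxPerm_inn M y.
have := maxPerm_out M y; rewrite /out /outp /= !xpair_eqE.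
by rewrite (bneq (sigma y)).
Qed.

Lemma ex_anti n : (forall a, out a != n) -> exists g, maxA g /\ (gtgt t g, gtau tau g) = n.
Proof.
move=> Ho; case: (pickP (fun b => inn b == n)) => [b /eqP Hb | Hn].
- have Hpred : forall y, ~~ eA y b by move=> y; rewrite /eA /= Hb Ho.
  have [w [Hw Hl]] := exists_ext cofnA Hpred.
  exists (inr (b, w)); split; first exact: maxAnti_nt.
  by rewrite -Hb.
- case: n Ho Hn => x e Ho Hn.
  exists (inl (inr (x, e))); split => //; apply: maxAnti_triv => // b.
  by rewrite Hn.
Qed.

Lemma ex_perm n : (forall b, inn b != n) ->
  exists m, maxP m /\ (gsrc s m, ~~ gsigma sigma m) = n.
Proof.
move=> Hi; case: (pickP (fun a => outp a == n)) => [a /eqP Ha | Hn].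
- have Hsucc : forall y, ~~ eP a y by move=> y; rewrite /eP /= Ha eq_sym Hi.
  have [a' [w [Hw Hl Hp]]] := exists_ext_rev fnP Hsucc.
  exists (inr (a', w)); split; first by apply: maxPerm_nt => //; rewrite Hl.
  by rewrite /= Hl -Ha.
- case: n Hi Hn => x e Hi Hn.
  exists (inl (inl (x, ~~ e))); rewrite /= negbK; split => //.
  apply: maxPerm_triv; rewrite negbK // => a.
  by rewrite Hn.
Qed.

Lemma un_anti_snk g1 g2 : maxA g1 -> maxA g2 ->
  (gtgt t g1, gtau tau g1) = (gtgt t g2, gtau tau g2) -> g1 = g2.
Proof.
move=> M1 M2; case: (maxAnti_cases M1) => [[x1 [e1 E1]]|[a1 [w1 [E1 P1]]]];
  case: (maxAnti_cases M2) => [[x2 [e2 E2]]|[a2 [w2 [E2 P2]]]];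
  subst g1 g2 => /=.
- by case=> -> ->.
- by move=> E; have := (maxAnti_triv_inv M1).2 a2; rewrite E /inn eqxx.
- by move=> E; have := (maxAnti_triv_inv M2).2 a1; rewrite -E /inn eqxx.
- move=> E; have Ea : a1 = a2 by apply: inn_inj; rewrite /inn E.
  subst a2; congr (inr (_, _)).
  case: (maxAnti_nt_inv M1) => _ _ L1; case: (maxAnti_nt_inv M2) => _ _ L2.
  exact: (det_gen fnA P1 P2 L1 L2).
Qed.

Lemma un_anti_src g1 g2 : maxA g1 -> maxA g2 ->
  (gsrc s g1, gsigma sigma g1) = (gsrc s g2, gsigma sigma g2) -> g1 = g2.
Proof.
move=> M1 M2; case: (maxAnti_cases M1) => [[x1 [e1 E1]]|[a1 [w1 [E1 P1]]]];
  case: (maxAnti_cases M2) => [[x2 [e2 E2]]|[a2 [w2 [E2 P2]]]];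
  subst g1 g2 => /=.
- by case=> -> ->.
- by move=> E; have := (maxAnti_triv_inv M1).1 (last a2 w2); rewrite E /out eqxx.
- by move=> E; have := (maxAnti_triv_inv M2).1 (last a1 w1); rewrite -E /out eqxx.
- move=> E; have Ea : last a1 w1 = last a2 w2 by apply: out_inj; rewrite /out E.
  case: (maxAnti_nt_inv M1) => _ N1 _; case: (maxAnti_nt_inv M2) => _ N2 _.
  by case: (det_rev cofnA P1 P2 Ea N1 N2) => -> ->.
Qed.

Lemma un_perm_snk g1 g2 : maxP g1 -> maxP g2 ->
  (gtgt t g1, gtau tau g1) = (gtgt t g2, gtau tau g2) -> g1 = g2.
Proof.
move=> M1 M2; case: (maxPerm_cases M1) => [[x1 [e1 E1]]|[a1 [w1 [E1 P1]]]];
  case: (maxPerm_cases M2) => [[x2 [e2 E2]]|[a2 [w2 [E2 P2]]]];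
  subst g1 g2 => /=.
- by case=> -> /negb_inj ->.
- by move=> E; have := (maxPerm_triv_inv M1).2 a2; rewrite E /inn eqxx.
- by move=> E; have := (maxPerm_triv_inv M2).2 a1; rewrite -E /inn eqxx.
- move=> E; have Ea : a1 = a2 by apply: inn_inj; rewrite /inn E.
  subst a2; congr (inr (_, _)).
  case: (maxPerm_nt_inv M1) => _ _ L1; case: (maxPerm_nt_inv M2) => _ _ L2.
  exact: (det_gen fnP P1 P2 L1 L2).
Qed.

Lemma anti_uniq g : maxA g -> uniq (arrows g).
Proof.
move=> M; case: (maxAnti_cases M) => [[x [e ->]] //|[a [w [E P]]]]; subst g.
by case: (maxAnti_nt_inv M) => _ _ L; apply: (uniq_gen fnA P L).
Qed.

Lemma anti_disj g1 g2 x : maxA g1 -> maxA g2 ->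
  x \in arrows g1 -> x \in arrows g2 -> g1 = g2.
Proof.
move=> M1 M2; case: (maxAnti_cases M1) => [[x1 [e1 ->]] //|[a1 [w1 [E1 P1]]]];
  case: (maxAnti_cases M2) => [[x2 [e2 ->]] //|[a2 [w2 [E2 P2]]]]; subst g1 g2 => /= X1 X2.
case: (maxAnti_nt_inv M1) => _ N1 L1; case: (maxAnti_nt_inv M2) => _ N2 L2.
by case: (mem_disj fnA cofnA P1 P2 N1 N2 L1 L2 X1 X2) => -> ->.
Qed.

End Main.

Section Final.
Variables (V A : finType) (s t : A -> V) (R : rel A) (sigma tau : A -> bool).
Hypothesis HS : sign_functions s t R sigma tau.

Notation maxA := (maxAnti s t R sigma tau).
Notation maxP := (maxPerm s t R sigma tau).
Notation out := (@out V A s sigma).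
Notation inn := (@inn V A t tau).

Definition SK := [set n : V * bool | [forall a, out a != n]].
Definition mkg n := epsilon (inhabits (inl (inr n) : gpath V A))
  (fun g => maxA g /\ (gtgt t g, gtau tau g) = n).

Lemma mkg_spec n : n \in SK -> maxA (mkg n) /\ (gtgt t (mkg n), gtau tau (mkg n)) = n.
Proof.
rewrite inE => /forallP H.
apply: (epsilon_spec _ (fun g => maxA g /\ (gtgt t g, gtau tau g) = n)).
apply: (ex_anti HS) => a.
exact: H a.
Qed.

Definition sN : {fset gpath V A} := seq_fset tt [seq mkg n | n <- enum SK].

Lemma sNE g : (g \in sN) = maxA g.
Proof.
rewrite seq_fsetE; apply/mapP/idP => [[n nS ->]|M].
  by rewrite mem_enum in nS; exact: (mkg_spec nS).1.
have nS : (gtgt t g, gtau tau g) \in SK.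
  by rewrite inE; apply/forallP => a; exact: maxAnti_out M a.
exists (gtgt t g, gtau tau g); first by rewrite mem_enum.
have [M' E'] := mkg_spec nS; exact: (un_anti_snk HS M M' (esym E')).
Qed.

Lemma card_sN : #|` sN| = #|SK|.
Proof.
rewrite size_seq_fset undup_id ?size_map -?cardE //.
rewrite map_inj_in_uniq ?enum_uniq // => n1 n2; rewrite !mem_enum => H1 H2 E.
by rewrite -(mkg_spec H1).2 -(mkg_spec H2).2 E.
Qed.

Lemma card_SK : #|SK| + #|A| = 2 * #|V|.
Proof.
have -> : SK = ~: (out @: setT).
  apply/setP => n; rewrite !inE; apply/forallP/negP => [H /imsetP [a _ E]|H a].
    by have := H a; rewrite E eqxx.
  by apply/negP => /eqP E; apply: H; apply/imsetP; exists a.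
have := cardsC (out @: setT); rewrite card_imset; last exact: (out_inj HS).
rewrite cardsT card_prod card_bool; lia.
Qed.


Notation psi' := (psi s t R sigma tau).
Notation phi' := (phi s t R sigma tau).
Notation Phi' := (Phi s t R sigma tau).

Lemma psi_spec g : maxA g ->
  [/\ maxP (psi' g), gsrc s (psi' g) = gsrc s g & gsigma sigma (psi' g) = ~~ gsigma sigma g].
Proof.
move=> M.
have : maxP (psi' g) /\ gsrc s (psi' g) = gsrc s g /\ gsigma sigma (psi' g) = ~~ gsigma sigma g.
  apply: (epsilon_spec _ (fun g' => maxP g' /\ gsrc s g' = gsrc s g /\ gsigma sigma g' = ~~ gsigma sigma g)).
  have [m [Mm E]] := ex_perm HS (maxAnti_inn M).
  by exists m; case: E => E1 E2; rewrite E1 -E2 negbK.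
by case=> ? [? ?]; split.
Qed.

Lemma phi_spec m : maxP m ->
  [/\ maxA (phi' m), gtgt t (phi' m) = gtgt t m & gtau tau (phi' m) = ~~ gtau tau m].
Proof.
move=> M.
have : maxA (phi' m) /\ gtgt t (phi' m) = gtgt t m /\ gtau tau (phi' m) = ~~ gtau tau m.
  apply: (epsilon_spec _ (fun g' => maxA g' /\ gtgt t g' = gtgt t m /\ gtau tau g' = ~~ gtau tau m)).
  have [g [Mg E]] := ex_anti HS (maxPerm_out M).
  by exists g; case: E => E1 E2; rewrite E1 E2.
by case=> ? [? ?]; split.
Qed.

Lemma Phi_in g : g \in sN -> Phi' g \in sN.
Proof.
rewrite !sNE => M; have [M1 _ _] := psi_spec M; by have [] := phi_spec M1.
Qed.

Lemma Phi_inj : {in sN &, injective Phi'}.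
Proof.
move=> g1 g2; rewrite !sNE => M1 M2; rewrite /Phi => E.
have [P1 S1 G1] := psi_spec M1; have [P2 S2 G2] := psi_spec M2.
have [_ T1 U1] := phi_spec P1; have [_ T2 U2] := phi_spec P2.
have Em : psi' g1 = psi' g2.
  apply: (un_perm_snk HS P1 P2); rewrite -T1 -T2 E; congr pair.
  by apply: negb_inj; rewrite -U1 -U2 E.
apply: (un_anti_src HS M1 M2); rewrite -S1 -S2 Em; congr pair.
by apply: negb_inj; rewrite -G1 -G2 Em.
Qed.

Notation Sq := (enum_fset sN).

Lemma Phi_in' g : g \in Sq -> Phi' g \in Sq.
Proof. exact: Phi_in. Qed.
Lemma Phi_inj' : {in Sq &, injective Phi'}.
Proof. exact: Phi_inj. Qed.

Lemma orbNE g z : (z \in Phi_orbit s t R sigma tau sN g) = (z \in orb Phi' Sq g).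
Proof.
by apply/imfsetP/mapP => [[k kin ->]|[k kin ->]]; exists k.
Qed.

Lemma countN x : x \in Sq -> count (fun O => x \in O) (N_orbits s t R sigma tau sN) = 1.
Proof.
move=> xS.
rewrite (eq_in_count (a2 := pred1 (Phi_orbit s t R sigma tau sN x))).
  rewrite count_uniq_mem ?fset_uniq //.
  by have -> : Phi_orbit s t R sigma tau sN x \in N_orbits s t R sigma tau sN by apply/imfsetP; exists x.
move=> O /imfsetP [g gS ->] /=.
apply/idP/eqP => [xO|->]; last by rewrite orbNE; apply: (orb_self Phi_in' Phi_inj').
apply/fsetP => z; rewrite !orbNE; apply: (orb_eq Phi_in' Phi_inj') => //.
by rewrite -orbNE.
Qed.

Lemma sumN (F : gpath V A -> nat) :
  \sum_(O <- N_orbits s t R sigma tau sN) \sum_(g <- O) F g = \sum_(g <- Sq) F g.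
Proof.
transitivity (\sum_(O <- N_orbits s t R sigma tau sN) \sum_(x <- Sq | x \in O) F x);
  last by apply: (sum_part (m := fun (O : {fset gpath V A}) x => x \in O)); exact: countN.
apply: eq_big_seq => O /imfsetP [g gS ->].
rewrite sum_sub ?fset_uniq // => z; rewrite orbNE; apply: (orb_sub Phi_in' Phi_inj') => //.
Qed.


Notation Cs := (Cset s t R sigma tau).
Notation Psi' := (Psi s t R sigma tau).
Notation eA' := (eA s t sigma tau).

Lemma CsetP a : reflect (~ exists g, maxA g /\ a \in arrows g) (a \in Cs).
Proof.
rewrite inE /pbool; case: excluded_middle_informative => H /=; constructor => //.
Qed.

Lemma Psi_spec a : a \in Cs -> Psi' a \in Cs /\ inn (Psi' a) = out a.
Proof.
move=> aC.
have : Psi' a \in Cs /\ t (Psi' a) = s a /\ tau (Psi' a) = sigma a.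
  apply: (epsilon_spec _ (fun be => be \in Cs /\ t be = s a /\ tau be = sigma a)).
  case: (pickP (fun b => inn b == out a)) => [b /eqP Hb|Hn].
  - exists b; split; last by case: Hb.
    apply/CsetP => [[g [Mg bg]]].
    case: (maxAnti_cases HS Mg) => [[x [e E]]|[a1 [w1 [E P1]]]]; subst g => //.
    case: (maxAnti_nt_inv HS Mg) => _ N1 _.
    case: (eqVneq b a1) => [Eb|nb].
      by subst b; have := N1 a; rewrite /eA /= Hb eqxx.
    have [x xin ex] := pred_in P1 bg nb.
    have Ex : x = a by apply: (out_inj HS); move: ex; rewrite /eA /= Hb => /eqP.
    subst x; move/CsetP: aC; apply; exists (inr (a1, w1)); split => //.
  - exfalso.
    have Hsucc : forall y, ~~ eA' a y by move=> y; rewrite /eA /= eq_sym Hn.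
    have [a' [w [Pw Lw Nw]]] := exists_ext_rev (fnA HS) Hsucc.
    move/CsetP: aC; apply; exists (inr (a', w)); split.
      by apply: maxAnti_nt => //; rewrite Lw.
    by rewrite /= -Lw mem_last.
by case=> H1 [H2 H3]; split => //; rewrite /inn /out H2 H3.
Qed.

Notation Sc := (enum Cs).

Lemma Psi_in a : a \in Sc -> Psi' a \in Sc.
Proof. by rewrite !mem_enum => /Psi_spec []. Qed.

Lemma Psi_inj : {in Sc &, injective Psi'}.
Proof.
move=> a1 a2; rewrite !mem_enum => /Psi_spec [_ E1] /Psi_spec [_ E2] E.
by apply: (out_inj HS); rewrite -E1 -E2 E.
Qed.

Lemma orbCE a z : (z \in Psi_orbit s t R sigma tau a) = (z \in orb Psi' Sc a).
Proof.
apply/imsetP/mapP => [[k _ ->]|[k kin ->]].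
  by exists (nat_of_ord k) => //; rewrite mem_iota add0n -cardE ltn_ord.
have kC : k < #|Cs| by move: kin; rewrite mem_iota add0n -cardE.
by exists (Ordinal kC).
Qed.

Lemma countC x : x \in Sc -> count (fun O : {set A} => x \in O) (enum (C_orbits s t R sigma tau)) = 1.
Proof.
move=> xS.
rewrite (eq_in_count (a2 := pred1 (Psi_orbit s t R sigma tau x))).
  rewrite count_uniq_mem ?enum_uniq // mem_enum.
  have -> // : Psi_orbit s t R sigma tau x \in C_orbits s t R sigma tau.
  by apply/imsetP; exists x => //; rewrite -mem_enum.
move=> O; rewrite mem_enum => /imsetP [g gS ->] /=.
rewrite -mem_enum in gS.
apply/idP/eqP => [xO|->]; last by rewrite orbCE; apply: (orb_self Psi_in Psi_inj).
apply/setP => z; rewrite !orbCE; apply: (orb_eq Psi_in Psi_inj) => //.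
by rewrite -orbCE.
Qed.

Lemma sumC : \sum_(O in C_orbits s t R sigma tau) qC O = #|Cs|.
Proof.
rewrite -big_enum /=.
transitivity (\sum_(O <- enum (C_orbits s t R sigma tau)) \sum_(x <- Sc | x \in O) 1).
  apply: eq_big_seq => O; rewrite mem_enum => /imsetP [g gC ->].
  rewrite -mem_enum in gC.
  rewrite /qC cardE -sum1_size -(sum_sub (S := Sc) (L := enum (Psi_orbit s t R sigma tau g)) _ (enum_uniq _) (enum_uniq _)).
    by apply: eq_bigl => z; rewrite mem_enum.
  by move=> z; rewrite mem_enum orbCE; apply: (orb_sub Psi_in Psi_inj).
rewrite (sum_part (m := fun (O : {set A}) x => x \in O)); last exact: countC.
by rewrite sum1_size -cardE.
Qed.

Lemma countArr a : count (fun g => a \in arrows g) Sq = if a \in Cs then 0 else 1.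
Proof.
case: (CsetP a) => [aC|].
  rewrite (eq_in_count (a2 := pred0)) ?count_pred0 // => g; rewrite sNE => Mg /=.
  by apply/negP => ag; apply: aC; exists g.
move/(@NNPP _) => [g0 [M0 ag0]].
rewrite (eq_in_count (a2 := pred1 g0)) ?count_uniq_mem ?fset_uniq ?sNE ?M0 //.
move=> g; rewrite sNE => Mg /=; apply/idP/eqP => [ag|->] //.
exact: (anti_disj HS Mg M0 ag ag0).
Qed.

Lemma sumArr : \sum_(g <- Sq) glen g + #|Cs| = #|A|.
Proof.
transitivity (\sum_(g <- Sq) \sum_(a : A) (if a \in arrows g then 1 else 0) +
   \sum_(a : A) (if a \in Cs then 1 else 0)).
  congr addn; last by rewrite -big_mkcond sum1_card.
  apply: eq_big_seq => g; rewrite sNE => Mg.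
  rewrite -big_mkcond sum1_card /glen; apply/esym/card_uniqP.
  exact: (anti_uniq HS Mg).
rewrite exchange_big -big_split /= -[#|A|]sum1_card; apply: eq_bigr => a _.
rewrite -big_mkcond sum1_count countArr.
by case: (a \in Cs).
Qed.

End Final.

Unset Implicit Arguments.
Local Open Scope fset_scope.

Theorem lemma3p2 (V A : finType) (s t : A -> V) (R : rel A)
    (sigma tau : A -> bool) :
  gentle s t R ->
  sign_functions s t R sigma tau ->
  exists sN : {fset gpath V A},
    (forall g : gpath V A, (g \in sN) = maxAnti s t R sigma tau g) /\
    (((\sum_(O <- N_orbits s t R sigma tau sN) pO O
       + \sum_(O in C_orbits s t R sigma tau) pC O)%N%:Z
      = 2 * (#|V|)%:Z - (#|A|)%:Z)%R) /\
    ((\sum_(O <- N_orbits s t R sigma tau sN) qO O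
       + \sum_(O in C_orbits s t R sigma tau) qC O)%N = #|A|).
Proof.
move=> _ HS; exists (sN s t R sigma tau); split; first exact: sNE.
split.
  have -> : \sum_(O <- N_orbits s t R sigma tau (sN s t R sigma tau)) pO O = #|SK s sigma|.
    rewrite -(card_sN HS) -sum1_size -(sumN HS (fun _ => 1)); apply: eq_bigr => O _.
    by rewrite sum1_size.
  rewrite big1 // addn0.
  have := card_SK HS; lia.
rewrite (sumN HS (@glen V A)) sumC //; exact: sumArr.
Qed.
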